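(* Let $V$ be an irreducible Whittaker module of type $\eta$ over $R$ with cyclic Whittaker vector $w$. Then $\{H^iw : i\ge 0\}$ is a $\mathbb{C}$-basis of $V$.
   Context: Let $f\in\mathbb{C}[H]$ be a polynomial. $R=R(f)$ is the associative $\mathbb{C}$-algebra generated by $E,F,H$ with relations $EF-FE=f(H)$, $HE-EH=E$, $HF-FH=-F$. Let $R(E)=\mathbb{C}[E]$. Fix an algebra homomorphism $\eta:R(E)\to\mathbb{C}$ with $\eta(E)\neq0$. A vector $v$ of an $R$-module $V$ is a Whittaker vector of type $\eta$ if $Ev=\eta(E)v$; $V$ is a Whittaker module of type $\eta$ with cyclic Whittaker vector $w$ if $w$ is a Whittaker vector and $V=Rw$. *)

(* Defs.v *)
From HB Require Import structures.
From mathcomp Require Import all_boot all_order all_algebra.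
From mathcomp Require Import reals.
From mathcomp.real_closed Require Import complex.
Set Implicit Arguments. Unset Strict Implicit. Unset Printing Implicit Defensive.
Import Order.TTheory GRing.Theory Num.Theory.
Local Open Scope ring_scope.

(* The complex numbers: C = R[i] for R a (the) complete archimedean real field. *)

Section WhittakerDefs.
Variables (K : fieldType) (V : lmodType K).

Definition poly_op (p : {poly K}) (T : V -> V) (v : V) : V :=
  \sum_(i < size p) p`_i *: iter i T v.

(* (V, E, F, H) is a module over R(f) = C<E,F,H>/(EF-FE=f(H), HE-EH=E, HF-FH=-F):
   E, F, H are linear endomorphisms of V satisfying the defining relations. *)
Definition R_module (f : {poly K}) (E F H : {linear V -> V}) : Prop :=
  (forall v, E (F v) - F (E v) = poly_op f H v) /\
  (forall v, H (E v) - E (H v) = E v) /\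
  (forall v, H (F v) - F (H v) = - F v).

Definition R_submodule (E F H : V -> V) (S : V -> Prop) : Prop :=
  [/\ S 0, (forall u v, S u -> S v -> S (u + v)),
      (forall (c : K) v, S v -> S (c *: v)) &
      [/\ forall v, S v -> S (E v), forall v, S v -> S (F v)
        & forall v, S v -> S (H v)]].

Inductive cyc (E F H : V -> V) (w : V) : V -> Prop :=
  | cyc_w : cyc E F H w w
  | cyc_add u v : cyc E F H w u -> cyc E F H w v -> cyc E F H w (u + v)
  | cyc_scale (c : K) v : cyc E F H w v -> cyc E F H w (c *: v)
  | cyc_E v : cyc E F H w v -> cyc E F H w (E v)
  | cyc_F v : cyc E F H w v -> cyc E F H w (F v)
  | cyc_H v : cyc E F H w v -> cyc E F H w (H v).

Definition irreducible_R (E F H : V -> V) : Prop :=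
  (exists v : V, v != 0) /\
  forall S, R_submodule E F H S -> (forall v, S v -> v = 0) \/ (forall v, S v).

(* Whittaker vector of type eta, where eta : C[E] -> C is determined by
   the scalar a = eta(E). *)
Definition whittaker_vector (E : V -> V) (a : K) (v : V) : Prop := E v = a *: v.

Definition whittaker_module (E F H : V -> V) (a : K) (w : V) : Prop :=
  whittaker_vector E a w /\ forall v, cyc E F H w v.

Definition is_basis (b : nat -> V) : Prop :=
  (forall n (c : 'I_n -> K), \sum_(i < n) c i *: b i = 0 -> forall i, c i = 0) /\
  (forall v, exists n (c : 'I_n -> K), v = \sum_(i < n) c i *: b i).

End WhittakerDefs.

(* Main.v *)
Require Import Defs.
From HB Require Import structures.
From mathcomp Require Import all_boot all_order all_algebra.
From mathcomp Require Import reals.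
From mathcomp.real_closed Require Import complex.
From mathcomp Require Import ring.
Import Order.TTheory GRing.Theory Num.Theory.
Local Open Scope ring_scope.

Section PolyOp.
Context {K : fieldType} {V : lmodType K}.
Implicit Types (T S : V -> V) (x y : V).

Definition islin (T : V -> V) :=
  (forall x y, T (x + y) = T x + T y) /\ (forall (c : K) x, T (c *: x) = c *: T x).

Lemma lin0 T : islin T -> T 0 = 0.
Proof. by move=> [_ h]; have := h 0 0; rewrite !scale0r. Qed.

Lemma linB T : islin T -> forall x y, T (x - y) = T x - T y.
Proof.
move=> [h1 h2] x y; by rewrite h1 -scaleN1r h2 scaleN1r.
Qed.

Lemma lin_sum T : islin T -> forall n (G : 'I_n -> V),
  T (\sum_(i < n) G i) = \sum_(i < n) T (G i).
Proof.
move=> hT; elim=> [|n IH] G; first by rewrite !big_ord0 lin0.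
by case: hT => h1 h2; rewrite !big_ord_recr /= h1 IH.
Qed.

Lemma lin_of (T : {linear V -> V}) : islin T.
Proof. by split=> [x y|c x]; rewrite ?linearD ?linearZ. Qed.

Lemma iter_lin T n : islin T -> islin (iter n T).
Proof.
move=> hT; elim: n => [|n IH] //; split=> [x y|c x] /=.
- by case: IH => -> _; case: hT => ->.
- by case: IH => _ ->; case: hT => _ ->.
Qed.

Lemma iter_comm (S T : V -> V) n x : (forall y, S (T y) = T (S y)) ->
  S (iter n T x) = iter n T (S x).
Proof. by move=> h; elim: n => //= n IH; rewrite h IH. Qed.

Lemma poly_opE (T : V -> V) (p : {poly K}) n x : (size p <= n)%N ->
  poly_op p T x = \sum_(i < n) p`_i *: iter i T x.
Proof.
move=> hn; rewrite /poly_op (big_ord_widen n (fun i => p`_i *: iter i T x) hn).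
rewrite big_mkcond; apply: eq_bigr => i _ /=.
case: ifP => // /negbT; rewrite -leqNgt => h.
by rewrite nth_default // scale0r.
Qed.

Lemma poly_opD T (p q : {poly K}) x : poly_op (p + q) T x = poly_op p T x + poly_op q T x.
Proof.
set n := maxn (size p) (size q).
rewrite (@poly_opE _ _ n) ?(leq_trans (size_polyD _ _)) //.
rewrite (@poly_opE _ p n) ?leq_maxl // (@poly_opE _ q n) ?leq_maxr //.
by rewrite -big_split; apply: eq_bigr => i _; rewrite coefD scalerDl.
Qed.

Lemma poly_opZ T (c : K) (p : {poly K}) x : poly_op (c *: p) T x = c *: poly_op p T x.
Proof.
rewrite (@poly_opE _ _ (size p)) ?size_scale_leq // /poly_op scaler_sumr.
by apply: eq_bigr => i _; rewrite coefZ scalerA.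
Qed.

Lemma poly_opN T (p : {poly K}) x : poly_op (- p) T x = - poly_op p T x.
Proof. by rewrite -[- p]scaleN1r poly_opZ scaleN1r. Qed.

Lemma poly_opB T (p q : {poly K}) x : poly_op (p - q) T x = poly_op p T x - poly_op q T x.
Proof. by rewrite poly_opD poly_opN. Qed.

Lemma poly_op0 T x : poly_op 0 T x = 0.
Proof. by rewrite /poly_op size_poly0 big_ord0. Qed.

Lemma poly_opC T (c : K) x : poly_op c%:P T x = c *: x.
Proof. by rewrite (@poly_opE _ _ 1) ?size_polyC_leq1 // big_ord1 coefC. Qed.

Lemma poly_op1 T x : poly_op 1 T x = x.
Proof. by rewrite -polyC1 poly_opC scale1r. Qed.

Lemma poly_opMX T (p : {poly K}) x : poly_op (p * 'X) T x = poly_op p T (T x).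
Proof.
rewrite (@poly_opE _ _ (size p).+1); last first.
  by have [->|pn0] := eqVneq p 0; rewrite ?mul0r ?size_poly0 // size_mulX.
rewrite big_ord_recl coefMX /= scale0r add0r /poly_op.
by apply: eq_bigr => i _; rewrite coefMX /= -iterSr.
Qed.

Lemma poly_opX T x : poly_op 'X T x = T x.
Proof. by rewrite -[X in poly_op X]mul1r poly_opMX poly_op1. Qed.

Lemma poly_op_lin T p : islin T -> islin (poly_op p T).
Proof.
move=> hT; split=> [x y|c x]; rewrite /poly_op.
- rewrite -big_split; apply: eq_bigr => i _.
  by rewrite (iter_lin T i hT).1 scalerDr.
- rewrite scaler_sumr; apply: eq_bigr => i _.
  by rewrite (iter_lin T i hT).2 !scalerA mulrC.
Qed.

Lemma poly_op_comm (S T : V -> V) p x : islin S -> (forall y, S (T y) = T (S y)) ->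
  S (poly_op p T x) = poly_op p T (S x).
Proof.
move=> hS hc; rewrite /poly_op lin_sum //; apply: eq_bigr => i _.
by rewrite hS.2 iter_comm.
Qed.

Lemma poly_opXM T (p : {poly K}) x : islin T -> poly_op ('X * p) T x = T (poly_op p T x).
Proof.
by move=> hT; rewrite mulrC poly_opMX poly_op_comm.
Qed.

Lemma poly_opM T (p q : {poly K}) x : islin T ->
  poly_op (p * q) T x = poly_op p T (poly_op q T x).
Proof.
move=> hT; elim/poly_ind: p q x => [|p c IH] q x.
  by rewrite mul0r !poly_op0.
rewrite mulrDl poly_opD -mulrA IH poly_opXM // poly_opD poly_opMX.
by rewrite mul_polyC poly_opZ !poly_opC.
Qed.

End PolyOp.

Section PolyFacts.
Context {K : numFieldType}.
Implicit Types p q : {poly K}.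

Definition sh p := p \Po ('X - 1%:P).
Definition sh' p := p \Po ('X + 1%:P).

Lemma shD p q : sh (p + q) = sh p + sh q. Proof. exact: comp_polyD. Qed.
Lemma shB p q : sh (p - q) = sh p - sh q. Proof. exact: comp_polyB. Qed.
Lemma shZ c p : sh (c *: p) = c *: sh p. Proof. exact: comp_polyZ. Qed.
Lemma shM p q : sh (p * q) = sh p * sh q. Proof. exact: comp_polyM. Qed.
Lemma shC c : sh c%:P = c%:P. Proof. exact: comp_polyC. Qed.
Lemma shX : sh 'X = 'X - 1%:P. Proof. exact: comp_polyX. Qed.
Lemma sh0 : sh 0 = 0. Proof. exact: comp_poly0. Qed.
Lemma sh'D p q : sh' (p + q) = sh' p + sh' q. Proof. exact: comp_polyD. Qed.
Lemma sh'B p q : sh' (p - q) = sh' p - sh' q. Proof. exact: comp_polyB. Qed.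
Lemma sh'M p q : sh' (p * q) = sh' p * sh' q. Proof. exact: comp_polyM. Qed.
Lemma sh'C c : sh' c%:P = c%:P. Proof. exact: comp_polyC. Qed.
Lemma sh'X : sh' 'X = 'X + 1%:P. Proof. exact: comp_polyX. Qed.
Lemma sh'0 : sh' 0 = 0. Proof. exact: comp_poly0. Qed.

Lemma sh'K p : sh' (sh p) = p.
Proof.
rewrite /sh /sh' -comp_polyA comp_polyB comp_polyX comp_polyC.
by rewrite addrK comp_polyXr.
Qed.

Lemma size_sh p : size (sh p) = size p.
Proof. by rewrite /sh size_comp_poly2 // size_XsubC. Qed.

Lemma lead_sh p : lead_coef (sh p) = lead_coef p.
Proof. by rewrite /sh lead_coef_comp ?size_XsubC // lead_coefXsubC expr1n mulr1. Qed.

Lemma size_lead_sub p q : size p = size q -> lead_coef p = lead_coef q ->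
  (size (p - q)%R <= (size p).-1)%N.
Proof.
move=> hs hl; apply/leq_sizeP => j hj; rewrite coefB.
move: hj; rewrite leq_eqVlt => /orP [/eqP <-|hj].
  by move: hl; rewrite /lead_coef hs => ->; rewrite subrr.
have hj' : (size p <= j)%N by move: hj; case: (size p).
by rewrite !nth_default ?subr0 // -hs.
Qed.

Lemma size_Delta p : (size (sh p - p)%R <= (size p).-1)%N.
Proof. by rewrite -(size_sh p) size_lead_sub // ?size_sh ?lead_sh. Qed.

Lemma Delta0 p : sh p = p -> (size p <= 1)%N.
Proof.
move=> Hp; set q := p - (p.[0])%:P.
have shq : sh q = q by rewrite /q shB shC Hp.
have hr : forall k : nat, q.[-(k%:R)] = 0.
  elim=> [|k IH]; first by rewrite oppr0 /q !hornerE subrr.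
  transitivity ((sh q).[-(k%:R)]); last by rewrite shq.
  rewrite /sh horner_comp !hornerE.
  by rewrite mulrSr opprD.
have q0 : q = 0.
  apply/eqP; apply: contraT => qn0; exfalso.
  have := @max_poly_roots _ q [seq -(k%:R) | k <- iota 0 (size q)] qn0.
  rewrite size_map size_iota ltnn => H; suff : false by []; apply: H.
  - by apply/allP => x /mapP [k _ ->]; apply/eqP; rewrite hr.
  - rewrite map_inj_uniq ?iota_uniq // => m n /oppr_inj /eqP.
    by rewrite eqr_nat => /eqP.
by move/eqP: q0; rewrite subr_eq0 => /eqP ->; rewrite size_polyC_leq1.
Qed.

Fixpoint rise (k : nat) : {poly K} :=
  if k is k'.+1 then rise k' * ('X + (k'%:R)%:P) else 1.

Lemma rise_monic k : rise k \is monic.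
Proof.
elim: k => [|k IH] /=; first exact: monic1.
by rewrite monicMr ?monicXaddC.
Qed.

Lemma size_rise k : size (rise k) = k.+1.
Proof.
elim: k => [|k IH] /=; first by rewrite size_poly1.
rewrite size_Mmonic ?monicXaddC ?IH ?size_XaddC //.
  by rewrite addnC.
by rewrite -size_poly_gt0 IH.
Qed.

Lemma Delta_rise k : rise k.+1 - sh (rise k.+1) = (k.+1)%:R *: rise k.
Proof.
elim: k => [|k IH].
  rewrite /= !mul1r shD shX shC -mul_polyC mulr1 polyC1; ring.
have hA : sh (rise k.+1) = rise k.+1 - (k.+1)%:R *: rise k by rewrite -IH opprB addrC subrK.
rewrite [rise k.+2]/= shM hA shD shX shC -!mul_polyC.
rewrite [rise k.+1]/=.
rewrite -[k.+2]addn1 -[k.+1]addn1 !natrD !polyCD polyC1.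
ring.
Qed.

Lemma exists_u f : exists u, u - sh u = f.
Proof.
suff : forall n (f : {poly K}), (size f <= n)%N -> exists u, u - sh u = f by apply; exact: leqnn.
elim=> [|n IH] {}f hf.
  by exists 0; move: hf; rewrite size_poly_leq0 => /eqP ->; rewrite sh0 subr0.
have [hn|hn] := leqP (size f) n; first exact: IH.
have sf : size f = n.+1 by apply/eqP; rewrite eqn_leq hf hn.
set c := lead_coef f.
have cn0 : c != 0 by rewrite lead_coef_eq0 -size_poly_eq0 sf.
have [u' hu'] : exists u', u' - sh u' = f - c *: rise n.
  apply: IH; have := @size_lead_sub f (c *: rise n).
  rewrite sf /=; apply.
  - by rewrite size_scale // size_rise.
  - by rewrite lead_coefZ (monicP (rise_monic n)) mulr1.
exists (u' + (c / (n.+1)%:R) *: rise n.+1).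
rewrite shD opprD addrACA hu' shZ -scalerBr Delta_rise scalerA divfK.
  by rewrite subrK.
by rewrite pnatr_eq0.
Qed.

End PolyFacts.

Section Main.
Variables (K : numClosedFieldType) (V : lmodType K) (E F H : {linear V -> V}).
Variables (f u : {poly K}) (a : K) (w : V).
Hypothesis hR1 : forall v, E (F v) - F (E v) = poly_op f H v.
Hypothesis hR2 : forall v, H (E v) - E (H v) = E v.
Hypothesis hR3 : forall v, H (F v) - F (H v) = - F v.
Hypothesis ha : a != 0.
Hypothesis hw : E w = a *: w.
Hypothesis hu : u - sh u = f.

Local Notation P p v := (poly_op p (fun x => H x) v).

Lemma linH : islin (fun x => H x). Proof. exact: lin_of. Qed.

Lemma EH v : E (H v) = H (E v) - E v.
Proof. by move: (hR2 v) => /eqP; rewrite subr_eq => /eqP ->; rewrite addrC addKr. Qed.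

Lemma FH v : F (H v) = H (F v) + F v.
Proof. by move: (hR3 v) => /eqP; rewrite subr_eq => /eqP ->; rewrite addrAC addNr add0r. Qed.

Lemma EF v : E (F v) = F (E v) + poly_op f H v.
Proof. by rewrite -hR1 addrC subrK. Qed.

Lemma P4 p v : E (P p v) = P (sh p) (E v).
Proof.
elim/poly_ind: p v => [|p c IH] v; first by rewrite sh0 !poly_op0 linear0.
rewrite poly_opD poly_opMX poly_opC linearD linearZ IH.
rewrite shD shM shX shC poly_opD poly_opC poly_opM; last exact: linH.
congr (_ + _); congr (poly_op _ _ _).
by rewrite poly_opB poly_opX poly_opC scale1r EH.
Qed.

Lemma P5 p v : F (P p v) = P (sh' p) (F v).
Proof.
elim/poly_ind: p v => [|p c IH] v; first by rewrite sh'0 !poly_op0 linear0.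
rewrite poly_opD poly_opMX poly_opC linearD linearZ IH.
rewrite sh'D sh'M sh'X sh'C poly_opD poly_opC poly_opM; last exact: linH.
congr (_ + _); congr (poly_op _ _ _).
by rewrite poly_opD poly_opX poly_opC scale1r FH.
Qed.

Definition Om v := F (E v) + P u v.

Lemma Om_lin : islin Om.
Proof.
split=> [x y|c x]; rewrite /Om.
- by rewrite !linearD (poly_op_lin _ u linH).1 addrACA.
- by rewrite !linearZ (poly_op_lin _ u linH).2 scalerDr.
Qed.

Lemma OmH v : Om (H v) = H (Om v).
Proof.
rewrite /Om linearD; congr (_ + _); last first.
  by rewrite (poly_op_comm _ _ _ _ linH).
by rewrite EH linearB FH addrK.
Qed.

Lemma OmE v : Om (E v) = E (Om v).
Proof.
rewrite /Om linearD P4.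
rewrite EF.
by rewrite -addrA -poly_opD -hu subrK.
Qed.

Lemma OmF v : Om (F v) = F (Om v).
Proof.
rewrite /Om linearD P5.
rewrite EF.
rewrite linearD P5 -addrA -poly_opD; congr (_ + _); congr (poly_op _ _ _).
by rewrite -hu sh'B sh'K subrK.
Qed.


Lemma itOm_lin k : islin (iter k Om). Proof. exact: iter_lin _ _ Om_lin. Qed.
Lemma itOm0 k : iter k Om 0 = 0. Proof. exact: lin0 _ (itOm_lin k). Qed.
Lemma itOmD k x y : iter k Om (x + y) = iter k Om x + iter k Om y.
Proof. exact: (itOm_lin k).1. Qed.
Lemma itOmZ k c x : iter k Om (c *: x) = c *: iter k Om x.
Proof. exact: (itOm_lin k).2. Qed.
Lemma itOmB k x y : iter k Om (x - y) = iter k Om x - iter k Om y.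
Proof. exact: (linB (iter k Om) (itOm_lin k)). Qed.

Implicit Types Q : {poly {poly K}}.
Definition ev (Q : {poly {poly K}}) := \sum_(k < size Q) iter k Om (P Q`_k w).
Definition evmap (g : {poly K} -> {poly K}) (Q : {poly {poly K}}) : {poly {poly K}} :=
  \poly_(k < size Q) g Q`_k.

Lemma evE Q n : (size Q <= n)%N -> ev Q = \sum_(k < n) iter k Om (P Q`_k w).
Proof.
move=> hn; rewrite /ev (big_ord_widen n (fun k => iter k Om (P Q`_k w)) hn).
rewrite big_mkcond; apply: eq_bigr => i _ /=.
case: ifP => // /negbT; rewrite -leqNgt => h.
by rewrite nth_default // poly_op0 itOm0.
Qed.

Lemma ev_evmap g Q : ev (evmap g Q) = \sum_(k < size Q) iter k Om (P (g Q`_k) w).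
Proof.
rewrite (@evE _ (size Q)) ?size_poly //; apply: eq_bigr => k _.
by rewrite coef_poly ltn_ord.
Qed.

Lemma evD Q1 Q2 : ev (Q1 + Q2) = ev Q1 + ev Q2.
Proof.
set n := maxn (size Q1) (size Q2).
rewrite (@evE _ n) ?(leq_trans (size_polyD _ _)) //.
rewrite (@evE Q1 n) ?leq_maxl // (@evE Q2 n) ?leq_maxr //.
by rewrite -big_split; apply: eq_bigr => i _; rewrite coefD poly_opD itOmD.
Qed.

Lemma ev0 : ev 0 = 0.
Proof. by rewrite /ev size_poly0 big_ord0. Qed.

Lemma evN Q : ev (- Q) = - ev Q.
Proof. by apply/eqP; rewrite -addr_eq0 -evD addNr ev0. Qed.

Lemma evB Q1 Q2 : ev (Q1 - Q2) = ev Q1 - ev Q2.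
Proof. by rewrite evD evN. Qed.

Lemma ev1 : ev 1 = w.
Proof. by rewrite /ev size_poly1 big_ord1 coef1 /= poly_op1. Qed.

Lemma ev_mulX Q : ev (Q * 'X) = Om (ev Q).
Proof.
rewrite (@evE _ (size Q).+1); last first.
  by have [->|qn0] := eqVneq Q 0; rewrite ?mul0r ?size_poly0 // size_mulX.
rewrite big_ord_recl coefMX /= poly_op0 add0r /ev lin_sum; last exact: Om_lin.
by apply: eq_bigr => i _; rewrite coefMX /=.
Qed.

Lemma ev_E Q : E (ev Q) = ev (evmap (fun p => a *: sh p) Q).
Proof.
rewrite ev_evmap /ev lin_sum; last exact: lin_of.
apply: eq_bigr => k _; rewrite (iter_comm _ _ _ _ (fun y => esym (OmE y))).
by rewrite P4 hw (poly_op_lin _ _ linH).2 poly_opZ.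
Qed.

Lemma ev_H Q : H (ev Q) = ev (evmap (fun p => p * 'X) Q).
Proof.
rewrite ev_evmap /ev lin_sum; last exact: lin_of.
apply: eq_bigr => k _; rewrite (iter_comm _ _ _ _ (fun y => esym (OmH y))).
by rewrite poly_opMX (poly_op_comm _ _ _ _ linH).
Qed.

Lemma ev_Z c Q : c *: ev Q = ev (evmap (fun p => c *: p) Q).
Proof.
rewrite ev_evmap /ev scaler_sumr; apply: eq_bigr => k _.
by rewrite poly_opZ itOmZ.
Qed.

Lemma Fw : F w = a^-1 *: (Om w - P u w).
Proof. by rewrite /Om addrK hw linearZ scalerA mulVf // scale1r. Qed.

Lemma ev_F Q : F (ev Q) = ev (evmap (fun p => a^-1 *: sh' p) Q * 'X
   - evmap (fun p => a^-1 *: (sh' p * u)) Q).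
Proof.
rewrite evB ev_mulX !ev_evmap (lin_sum _ Om_lin) /ev (lin_sum _ (lin_of F)) -sumrB.
apply: eq_bigr => k _; rewrite (iter_comm _ _ _ _ (fun y => esym (OmF y))) -iterS iterSr -itOmB.
congr (iter k Om _).
rewrite P5 Fw (poly_op_lin _ _ linH).2 linB; last exact: poly_op_lin _ _ linH.
rewrite !poly_opZ (Om_lin.2) (poly_op_comm _ _ _ _ Om_lin); last by move=> y; rewrite OmH.
by rewrite poly_opM ?scalerBr //; exact: linH.
Qed.


Lemma T_sub : R_submodule E F H (fun v => exists Q, v = Om (ev Q)).
Proof.
split.
- by exists 0; rewrite ev0 (lin0 _ Om_lin).
- by move=> x y [Q1 ->] [Q2 ->]; exists (Q1 + Q2); rewrite evD (Om_lin.1).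
- by move=> c x [Q ->]; exists (evmap (fun p => c *: p) Q); rewrite -ev_Z (Om_lin.2).
split.
- by move=> x [Q ->]; exists (evmap (fun p => a *: sh p) Q); rewrite -OmE ev_E.
- by move=> x [Q ->]; eexists; rewrite -OmF ev_F.
- by move=> x [Q ->]; exists (evmap (fun p => p * 'X) Q); rewrite -OmH ev_H.
Qed.

Lemma ev_D Q : ev (evmap (fun p => a *: (sh p - p)) Q) = E (ev Q) - a *: ev Q.
Proof.
rewrite ev_E ev_Z !ev_evmap -sumrB; apply: eq_bigr => k _.
by rewrite -itOmB -poly_opB scalerBr.
Qed.

Lemma const_case Q : (forall k, leq (size Q`_k) 1) -> Q != 0 -> ev Q = 0 ->
  exists q : {poly K}, q != 0 /\ poly_op q Om w = 0.
Proof.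
move=> hs qn0 he; exists (\poly_(k < size Q) (Q`_k)`_0); split.
  have hsz : ((size Q).-1 < size Q)%N by rewrite prednK ?size_poly_gt0.
  apply/eqP => h0; have := congr1 (fun p : {poly K} => p`_((size Q).-1)) h0; rewrite coef_poly hsz coef0.
  move=> h; move: qn0; rewrite -lead_coef_eq0 /lead_coef.
  by rewrite (size1_polyC (hs _)) h eqxx.
rewrite -he (@poly_opE _ _ _ _ (size Q)) ?size_poly //; apply: eq_bigr => k _.
by rewrite coef_poly ltn_ord [in RHS](size1_polyC (hs k)) poly_opC itOmZ.
Qed.

Lemma deg_lemma d : forall Q, (forall k, leq (size Q`_k) d) -> Q != 0 -> ev Q = 0 ->
  exists q : {poly K}, q != 0 /\ poly_op q Om w = 0.
Proof.
elim: d => [|d IH] Q hs qn0 he.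
  move: qn0; have -> : Q = 0; last by rewrite eqxx.
  by apply/polyP => k; rewrite coef0; apply/eqP; rewrite -size_poly_leq0 hs.
set Q' := evmap (fun p => a *: (sh p - p)) Q.
have he' : ev Q' = 0 by rewrite ev_D he linear0 scaler0 subrr.
have [Q'0|Q'n0] := eqVneq Q' 0.
  apply: (@const_case Q _ qn0 he) => k.
  case: (ltnP k (size Q)) => hk; last by rewrite nth_default ?size_poly0.
  have := congr1 (fun p : {poly {poly K}} => p`_k) Q'0; rewrite coef_poly hk coef0 => /eqP.
  rewrite scaler_eq0 (negbTE ha) /= subr_eq0 => /eqP; exact: Delta0.
apply: (IH Q') => // k; rewrite coef_poly; case: ifP => _; last by rewrite size_poly0.
apply: (leq_trans (size_scale_leq _ _)); apply: (leq_trans (size_Delta _)).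
by have := hs k; case: (size Q`_k).
Qed.

Lemma root_lemma n : forall (q : {poly K}) v, (size q <= n)%N -> v != 0 -> q != 0 ->
  poly_op q Om v = 0 -> exists lam x, x != 0 /\ Om x = lam *: x.
Proof.
elim: n => [|n IH] q v hs vn0 qn0 hq.
  by move: qn0; rewrite -size_poly_eq0; move: hs; case: (size q).
have [s1|s1] := eqVneq (size q) 1.
  move: hq qn0; rewrite (size1_polyC (eq_leq s1)) poly_opC => /eqP.
  rewrite scaler_eq0 (negbTE vn0) orbF => /eqP ->; by rewrite eqxx.
have [lam hl] := closed_rootP q s1.
have [q' hq'] := factor_theorem q lam hl.
have q'n0 : q' != 0 by apply: contraNneq qn0 => h; rewrite hq' h mul0r.
have sq : size q = (size q').+1.
  by rewrite hq' size_Mmonic ?monicXsubC // size_XsubC addn2.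
move: hq; rewrite hq' mulrC poly_opM; last exact: Om_lin.
rewrite poly_opB poly_opX poly_opC.
set y := poly_op q' Om v.
have [y0|yn0] := eqVneq y 0.
  move=> _; apply: (IH q' v) => //; by move: hs; rewrite sq.
by move=> /eqP; rewrite subr_eq0 => /eqP hy; exists lam, y.
Qed.

Lemma ker_sub lam : R_submodule E F H (fun v => Om v = lam *: v).
Proof.
split.
- by rewrite (lin0 _ Om_lin) scaler0.
- by move=> x y hx hy; rewrite (Om_lin.1) hx hy scalerDr.
- by move=> c x hx; rewrite (Om_lin.2) hx !scalerA mulrC.
split.
- by move=> x hx; rewrite OmE hx linearZ.
- by move=> x hx; rewrite OmF hx linearZ.
- by move=> x hx; rewrite OmH hx linearZ.
Qed.

Lemma w_eigen : irreducible_R E F H -> w != 0 -> exists lam, Om w = lam *: w.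
Proof.
move=> [_ irr] wn0.
case: (irr _ T_sub) => [h0|hall].
  by exists 0; rewrite scale0r; apply: h0; exists 1; rewrite ev1.
have [Q hQ] := hall w.
pose Q0 : {poly {poly K}} := 1 - Q * 'X.
have e0 : ev Q0 = 0 by rewrite /Q0 evB ev1 ev_mulX -hQ subrr.
have n0 : Q0 != 0.
  apply/eqP => h0; have := congr1 (fun p : {poly {poly K}} => p`_0) h0.
  by rewrite /Q0 coefB coef1 coefMX /= subr0 coef0 => /eqP; rewrite oner_eq0.
have bound : forall k, leq (size Q0`_k) (\max_(j < size Q0) size (nth 0%R Q0 j))%N.
  move=> k; case: (ltnP k (size Q0)) => hk.
    exact: (@leq_bigmax _ (fun j : 'I_(size Q0) => size (nth 0%R Q0 j)) (Ordinal hk)).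
  by rewrite nth_default ?size_poly0.
have [q [qn0 hq]] := @deg_lemma _ Q0 bound n0 e0.
have [lam [x [xn0 hx]]] := @root_lemma _ q w (leqnn _) wn0 qn0 hq.
exists lam; case: (irr _ (ker_sub lam)) => [h|h]; last exact: h w.
by move: xn0; rewrite (h x hx) eqxx.
Qed.

Lemma indep : w != 0 -> forall p, P p w = 0 -> p = 0.
Proof.
move=> wn0 p; move: {2}(size p) (leqnn (size p)) => n; elim: n p => [|n IH] p hs hp.
  by apply/eqP; rewrite -size_poly_leq0.
have h1 : P (sh p) w = 0.
  have := P4 p w; rewrite hp linear0 hw (poly_op_lin _ _ linH).2 => /esym /eqP.
  by rewrite scaler_eq0 (negbTE ha) /= => /eqP.
have h2 : P (sh p - p) w = 0 by rewrite poly_opB h1 hp subrr.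
have hs' : ((size p).-1 <= n)%N by move: hs; case: (size p).
have := IH _ (leq_trans (size_Delta p) hs') h2 => /eqP; rewrite subr_eq0 => /eqP /Delta0 hs1.
move: hp; rewrite (size1_polyC hs1) poly_opC => /eqP; rewrite scaler_eq0 (negbTE wn0) orbF.
by move=> /eqP ->.
Qed.

Lemma w_nz : irreducible_R E F H -> (forall v, cyc E F H w v) -> w != 0.
Proof.
move=> [[v vn0] _] hc; apply/eqP => w0; move: vn0; have -> : v = 0; last by rewrite eqxx.
move: (hc v); rewrite w0.
elim=> [|x y _ -> _ ->|c x _ ->|x _ ->|x _ ->|x _ ->]; by rewrite ?addr0 ?scaler0 ?linear0.
Qed.

Lemma span lam : (forall v, cyc E F H w v) -> Om w = lam *: w ->
  forall v, exists p, v = P p w.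
Proof.
move=> hc hl v.
elim: (hc v) => [|x y _ [p ->] _ [q ->]|c x _ [p ->]|x _ [p ->]|x _ [p ->]|x _ [p ->]].
- by exists 1; rewrite poly_op1.
- by exists (p + q); rewrite poly_opD.
- by exists (c *: p); rewrite poly_opZ.
- by exists (a *: sh p); rewrite P4 hw (poly_op_lin _ _ linH).2 poly_opZ.
- exists (sh' p * (a^-1 *: (lam%:P - u))).
  rewrite poly_opM; last exact: linH.
  by rewrite P5 Fw hl poly_opZ poly_opB poly_opC.
- by exists ('X * p); rewrite poly_opXM //; exact: linH.
Qed.

Lemma basis_main : irreducible_R E F H -> (forall v, cyc E F H w v) ->
  is_basis (fun n => iter n H w).
Proof.
move=> irr hc.
have wn0 := w_nz irr hc.
have [lam hl] := w_eigen irr wn0.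
split.
- case=> [|n] c hsum i; first by case: i.
  pose p := \poly_(j < n.+1) c (inord j).
  have hp : P p w = 0.
    rewrite (@poly_opE _ _ _ _ n.+1) ?size_poly //.
    transitivity (\sum_(i < n.+1) c i *: iter i H w); last exact: hsum.
    apply: eq_bigr => j _.
    by rewrite coef_poly ltn_ord inord_val.
  have := congr1 (fun q : {poly K} => q`_i) (indep wn0 p hp).
  by rewrite coef_poly ltn_ord inord_val coef0.
- move=> v; have [p ->] := span lam hc hl v.
  by exists (size p), (fun i => p`_i).
Qed.

End Main.

Theorem mainTheorem9 (R : realType) (f : {poly R[i]}) (a : R[i]) (V : lmodType R[i])
  (E F H : {linear V -> V}) (w : V) :
  R_module f E F H -> a != 0 ->
  irreducible_R E F H -> whittaker_module E F H a w ->
  is_basis (fun n => iter n H w).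
Proof.
move=> [h1 [h2 h3]] ha irr [hw hc].
have [u hu] := exists_u f.
rewrite /whittaker_vector in hw.
exact: (@basis_main _ _ E F H f u a w h1 h2 h3 ha hw hu irr hc).
Qed.
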